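(* Let $X$ and $U$ be Hilbert spaces, let $A:D(A)\subset X\to X$ generate a $C_0$ semigroup $\{S(t);t\geq0\}$ on $X$ with $\|S(t)\|_{\mathcal L(X,X)}\leq Me^{\alpha t}$ for all $t\geq0$, where $M>0$ and $\alpha\geq0$ are constants. Let $B\in\mathcal L(X,U)$. Suppose there are positive constants $d,k$ and a nondecreasing function $\theta:[0,\infty)\to[0,\infty)$ such that $$\|S(L)u_0\|_X\leq\theta(L)e^{\frac{d}{L^k}}\Big(\int_0^L\|BS(t)u_0\|_U^2\,dt\Big)^{1/2}\quad\text{for all }L>0\text{ and }u_0\in X.$$ Then there exists a positive constant $N=N(d,k)$ such that $$\|S(T)u_0\|_X\leq F(T)e^{\frac{N}{T^k}}\int_0^T\|BS(t)u_0\|_U\,dt\quad\text{for all }T>0\text{ and }u_0\in X,$$ where $F(T)=\theta(T)^2\|B\|_{\mathcal L(X,U)}Me^{\alpha T}$ for $T>0$. *)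

(* Defs.v *)
From HB Require Import structures.
From mathcomp Require Import all_boot all_order all_algebra.
From mathcomp Require Import all_classical all_reals all_analysis.
Set Implicit Arguments. Unset Strict Implicit. Unset Printing Implicit Defensive.
Import Order.TTheory GRing.Theory Num.Theory.
Import numFieldNormedType.Exports.
Local Open Scope classical_set_scope.
Local Open Scope ring_scope.

Definition hilbert_space (R : realType) (V : completeNormedModType R) : Prop :=
  exists ip : V -> V -> R,
    (forall x y, ip x y = ip y x) /\
    (forall (a : R) (x y z : V), ip (a *: x + y) z = a * ip x z + ip y z) /\
    (forall x, ip x x = `|x| ^+ 2).

Definition is_linear (R : realType) (V W : normedModType R) (f : V -> W) : Prop :=
  forall (a : R) (x y : V), f (a *: x + y) = a *: f x + f y.

Definition bounded_linear (R : realType) (V W : normedModType R) (f : V -> W) : Prop :=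
  is_linear f /\ continuous f.

Definition opnorm (R : realType) (V W : normedModType R) (f : V -> W) : R :=
  sup [set `|f x| | x in [set x : V | `|x| <= 1]].

Definition C0_semigroup (R : realType) (V : normedModType R) (S : R -> V -> V) : Prop :=
  (forall t, 0 <= t -> bounded_linear (S t)) /\
  (forall x, S 0 x = x) /\
  (forall t s x, 0 <= t -> 0 <= s -> S (t + s) x = S t (S s x)) /\
  (forall x, (fun t => S t x) @ 0^'+ --> x).

(* Main.v *)
Require Import Defs.
From HB Require Import structures.
From mathcomp Require Import all_boot all_order all_algebra.
From mathcomp Require Import all_classical all_reals all_analysis.
From mathcomp Require Import lra ring.
Import Order.TTheory GRing.Theory Num.Theory.
Import numFieldNormedType.Exports.
Local Open Scope classical_set_scope.
Local Open Scope ring_scope.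
Set Implicit Arguments. Unset Strict Implicit.

Lemma lin0 (R : realType) (V W : normedModType R) (f : V -> W) :
  is_linear f -> f 0 = 0.
Proof.
move=> lf; have := lf 1 0 0; rewrite !scale1r addr0.
by move=> /(congr1 (fun z => z - f 0)); rewrite subrr addrK => <-.
Qed.

Lemma linZ (R : realType) (V W : normedModType R) (f : V -> W) a x :
  is_linear f -> f (a *: x) = a *: f x.
Proof. by move=> lf; have := lf a x 0; rewrite !addr0 lin0 // addr0. Qed.

Lemma linB (R : realType) (V W : normedModType R) (f : V -> W) x y :
  is_linear f -> f (x - y) = f x - f y.
Proof.
move=> lf; have := lf (-1) y x; rewrite scaleN1r => h.
by rewrite addrC h scaleN1r addrC.
Qed.

Lemma opnorm_ub (R : realType) (V W : normedModType R) (f : V -> W) :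
  bounded_linear f -> has_ubound [set `|f x| | x in [set x : V | `|x| <= 1]].
Proof.
move=> [lf cf].
have := cf 0; rewrite /continuous_at (lin0 lf) => /cvgrPdist_le.
move=> /(_ 1 ltr01) /nbhs_ballP [/= e e0 He].
exists (2 / e) => _ [y /= y1 <-].
have hb : ball (0:V) e ((e / 2) *: y).
  have hc : 0 <= e / 2 by rewrite divr_ge0 // ltW.
  rewrite -ball_normE /ball_ /= sub0r normrN normrZ (ger0_norm hc).
  apply: (le_lt_trans (y := e / 2)).
    by rewrite -[leRHS]mulr1 ler_wpM2l // divr_ge0 // ltW.
  by rewrite ltr_pdivrMr // ltr_pMr // ltr1n.
have := He _ hb.
have hc : 0 <= e / 2 by rewrite divr_ge0 // ltW.
rewrite /= sub0r normrN linZ // normrZ (ger0_norm hc) => h.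
rewrite ler_pdivlMr //; lra.
Qed.

Lemma opnorm_le (R : realType) (V W : normedModType R) (f : V -> W) x :
  bounded_linear f -> `|f x| <= opnorm f * `|x|.
Proof.
move=> bf; have ub := opnorm_ub bf; case: bf => lf cf.
have [->|x0] := eqVneq x 0; first by rewrite lin0 // !normr0 mulr0.
have nx : 0 < `|x| by rewrite normr_gt0.
have hi : 0 <= `|x|^-1 by rewrite invr_ge0.
have h : `|f (`|x|^-1 *: x)| <= opnorm f.
  apply: sup_ubound => //; exists (`|x|^-1 *: x) => //=.
  by rewrite normrZ (ger0_norm hi) mulVf // normr_eq0.
rewrite linZ // normrZ (ger0_norm hi) in h.
by rewrite -ler_pdivrMr // mulrC.
Qed.

Lemma opnorm_ge0 (R : realType) (V W : normedModType R) (f : V -> W) :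
  bounded_linear f -> 0 <= opnorm f.
Proof.
move=> bf; have ub := opnorm_ub bf; case: bf => lf cf.
apply: (le_trans _ (sup_ubound ub _)); last first.
  by exists 0 => //=; rewrite normr0 ler01.
by rewrite lin0 // normr0.
Qed.

Lemma right_delta (R : realType) (P : R -> Prop) :
  (\forall h \near 0^'+, P h) -> exists2 δ : R, 0 < δ & forall h, 0 < h < δ -> P h.
Proof.
move=> /nbhs_ballP [δ δ0 H]; exists δ => // h /andP[h0 hd].
apply: H => //; rewrite -ball_normE /ball_ /= sub0r normrN gtr0_norm //.
Qed.

Lemma S_bound (R : realType) (X : normedModType R) (S : R -> X -> X) (M alpha t : R) (x : X) :
  C0_semigroup S -> (forall t, 0 <= t -> opnorm (S t) <= M * expR (alpha * t)) ->
  0 <= t -> `|S t x| <= M * expR (alpha * t) * `|x|.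
Proof.
move=> [bl _] hb t0; apply: le_trans (opnorm_le x (bl t t0)) _.
by apply: ler_wpM2r => //; apply: hb.
Qed.

Lemma S_cont (R : realType) (X : normedModType R) (S : R -> X -> X) (M alpha : R) (u : X) (x0 : R) :
  C0_semigroup S -> (forall t, 0 <= t -> opnorm (S t) <= M * expR (alpha * t)) ->
  0 < M -> 0 <= alpha -> 0 < x0 -> (fun t => S t u) @ x0 --> S x0 u.
Proof.
move=> hS hb M0 a0 x00.
have [bl [S0 [Sadd Sr]]] := hS.
apply/cvgrPdist_lt => e e0.
pose C := M * expR (alpha * x0).
have C0 : 0 < C by rewrite mulr_gt0 // expR_gt0.
have /right_delta [δ δ0 Hδ] : \forall h \near 0^'+, `|u - S h u| < e / C.
  exact: ((cvgrPdist_lt _ _).1 (Sr u) (e / C) (divr_gt0 e0 C0)).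
have mb : 0 < Num.min δ x0 by rewrite lt_min δ0.
near=> t.
have : ball x0 (Num.min δ x0) t by near: t; exact: (nbhsx_ballx x0 _ mb).
rewrite -ball_normE /ball_ /= lt_min => /andP[td tx].
have Cle : forall s, 0 <= s <= x0 -> M * expR (alpha * s) <= C.
  move=> s /andP[s0 sx]; rewrite /C; apply: ler_wpM2l; first exact: ltW.
  by rewrite ler_expR; apply: ler_wpM2l.
have [tx0|xt] := ltrP t x0.
- have tpos : 0 < t.
    move: tx; rewrite gtr0_norm ?subr_gt0 //; lra.
  have h0 : 0 < x0 - t < δ.
    by rewrite subr_gt0 tx0 /=; move: td; rewrite gtr0_norm // subr_gt0.
  have -> : S x0 u = S t (S (x0 - t) u).
    by rewrite -Sadd ?ltW ?subr_gt0 // addrC subrK.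
  rewrite -linB; last by case: (bl t (ltW tpos)).
  apply: le_lt_trans (S_bound _ hS hb (ltW tpos)) _.
  have := Hδ _ h0; rewrite distrC => hl.
  have := Cle t; rewrite (ltW tpos) (ltW tx0) => /(_ isT) hC.
  apply: (le_lt_trans (y := C * `|S (x0 - t) u - u|)).
    by apply: ler_wpM2r.
  by rewrite -ltr_pdivlMl // mulrC.
- have [->|xt'] := eqVneq t x0; first by rewrite subrr normr0.
  have xt2 : x0 < t by rewrite lt_neqAle eq_sym xt' xt.
  have h0 : 0 < t - x0 < δ.
    by rewrite subr_gt0 xt2 /=; move: td; rewrite distrC gtr0_norm // subr_gt0.
  have -> : S t u = S x0 (S (t - x0) u).
    by rewrite -Sadd ?ltW ?subr_gt0 // addrC subrK.
  rewrite -linB; last by case: (bl x0 (ltW x00)).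
  apply: le_lt_trans (S_bound _ hS hb (ltW x00)) _.
  have := Hδ _ h0 => hl.
  apply: (le_lt_trans (y := C * `|u - S (t - x0) u|)) => //.
  by rewrite -ltr_pdivlMl // mulrC.
Unshelve. all: end_near. Qed.

Lemma Sphi_cont (R : realType) (X : normedModType R) (S : R -> X -> X) (M alpha : R) (u : X)
  (phi : X -> R) (x0 : R) :
  C0_semigroup S -> (forall t, 0 <= t -> opnorm (S t) <= M * expR (alpha * t)) ->
  0 < M -> 0 <= alpha -> continuous phi -> 0 < x0 ->
  (fun t => phi (S t u)) @ x0 --> phi (S x0 u).
Proof.
move=> hS hb M0 a0 pc x00.
have := continuous_comp (S_cont (u:=u) hS hb M0 a0 x00) (pc (S x0 u)); exact.
Qed.

Lemma Sphi_within (R : realType) (X : normedModType R) (S : R -> X -> X) (M alpha : R) (u : X)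
  (phi : X -> R) (a b : R) :
  C0_semigroup S -> (forall t, 0 <= t -> opnorm (S t) <= M * expR (alpha * t)) ->
  0 < M -> 0 <= alpha -> continuous phi -> 0 <= a -> a < b ->
  {within `[a, b], continuous (fun t => phi (S t u))}.
Proof.
move=> hS hb M0 a0 pc a00 ab.
have [bl [S0 [Sadd Sr]]] := hS.
apply/continuous_within_itvP => //; split.
- move=> x; rewrite in_itv /= => /andP[ax xb].
  exact: Sphi_cont hS hb M0 a0 pc (le_lt_trans a00 ax).
- have [->|an0] := eqVneq a 0.
    rewrite S0; exact: (@cvg_comp _ _ _ (fun t => S t u) phi _ _ _ (Sr u) (pc _)).
  apply: cvg_at_right_filter.
  by apply: Sphi_cont hS hb M0 a0 pc _; rewrite lt_neqAle eq_sym an0 a00.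
- apply: cvg_at_left_filter.
  exact: Sphi_cont hS hb M0 a0 pc (le_lt_trans a00 ab).
Qed.

Lemma shift_int (R : realType) (G : R -> R) (a L : R) : 0 < L ->
  {within `[a, L + a], continuous G} ->
  Rintegral lebesgue_measure `[0, L] (fun t => G (t + a)) =
  Rintegral lebesgue_measure `[a, L + a] G.
Proof.
move=> L0 cG.
pose F := fun x : R => x + a.
have dF : forall x, derive1 F x = 1.
  move=> x; rewrite derive1E deriveD // derive_id derive_cst addr0 //.
have dFE : derive1 F = fun=> 1 by apply/funext => x; exact: dF.
have cF : continuous F.
  by move=> x; apply: cvgD; [exact: cvg_id | exact: cvg_cst].
have h := @integration_by_substitution_increasing R F G 0 L (ltW L0).
rewrite /F /= add0r in h.
rewrite /Rintegral h //.
- congr fine; apply: eq_integral => x _ /=; rewrite !fctE; have := dF x; rewrite /F => ->; rewrite mulr1 //.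
- by move=> x y _ _ xy; rewrite ltrD2r.
- by rewrite dFE => x _; exact: cst_continuous.
- by rewrite dFE; exact: is_cvg_cst.
- by rewrite dFE; exact: is_cvg_cst.
- split.
  + by move=> x _; apply: derivableD => //; exact: derivable_id.
  + exact: cvg_at_right_filter (cF 0).
  + exact: cvg_at_left_filter (cF L).
Qed.

Lemma int_cont (R : realType) (f : R -> R) (a b : R) :
  {within `[a, b], continuous f} ->
  lebesgue_measure.-integrable `[a, b] (EFin \o f).
Proof. by move=> cf; apply: continuous_compact_integrable => //; exact: segment_compact. Qed.

Lemma sub_Rint (R : realType) (f : R -> R) (a b c e : R) :
  {within `[c, e], continuous f} -> (forall x, c <= x <= e -> 0 <= f x) ->
  c <= a -> b <= e ->
  Rintegral lebesgue_measure `[a, b] f <= Rintegral lebesgue_measure `[c, e] f.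
Proof.
move=> cf f0 ca be.
have sub : `[a, b] `<=` `[c, e] by apply: subset_itv; rewrite bnd_simp.
have ie := int_cont cf.
have ia : lebesgue_measure.-integrable `[a, b] (EFin \o f).
  exact: integrableS ie.
rewrite /Rintegral fine_le //; try exact: integrable_fin_num.
apply: ge0_subset_integral => //.
- exact: measurable_int ie.

Qed.

Lemma core (R : realType) (d k : R) (X U : normedModType R) (S : R -> X -> X) (B : X -> U)
  (M alpha : R) (theta : R -> R) (T : R) (u : X) (a L : R) :
  C0_semigroup S -> 0 < M -> 0 <= alpha ->
  (forall t, 0 <= t -> opnorm (S t) <= M * expR (alpha * t)) ->
  bounded_linear B ->
  (forall t, 0 <= t -> 0 <= theta t) ->
  (forall s t, 0 <= s -> s <= t -> theta s <= theta t) ->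
  (forall (L : R) (u0 : X), 0 < L ->
       `|S L u0| <= theta L * expR (d / L `^ k) *
         Num.sqrt (Rintegral lebesgue_measure `[0, L]
                     (fun t => `|B (S t u0)| ^+ 2))) ->
  0 <= a -> 0 < L -> L + a <= T ->
  `|S (L + a) u| <= theta T * expR (d / L `^ k) *
     Num.sqrt (opnorm B * M * expR (alpha * T) * `|S a u| *
       Rintegral lebesgue_measure `[0, T] (fun t => `|B (S t u)|)).
Proof.
move=> hS M0 a0 hb bB th0 thm hobs a00 L0 LT.
have [bl [S0 [Sadd Sr]]] := hS.
have [lB cB] := bB.
have oB := opnorm_ge0 bB.
set u' := S a u.
have -> : S (L + a) u = S L u' by rewrite Sadd // ltW.
apply: le_trans (hobs L u' L0) _.
set G := Rintegral lebesgue_measure `[0, T] (fun t => `|B (S t u)|).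
set K := opnorm B * M * expR (alpha * T).
have K0 : 0 <= K by rewrite !mulr_ge0 // ?ltW // expR_ge0.
pose c := K * `|u'|.
have c0 : 0 <= c by rewrite mulr_ge0.
have T0 : 0 < T by apply: lt_le_trans LT; rewrite ltr_wpDr.
have pc : continuous (fun x : X => `|B x|).
  by move=> x; apply: continuous_comp; [exact: cB | exact: norm_continuous].
have gb : forall t, 0 <= t <= L -> `|B (S t u')| <= c.
  move=> t /andP[t0 tL].
  apply: le_trans (opnorm_le _ bB) _.
  rewrite /c /K -!mulrA; apply: ler_wpM2l => //.
  apply: le_trans (S_bound _ hS hb t0) _.
  rewrite mulrA; apply: ler_wpM2r => //; apply: ler_wpM2l; first exact: ltW.
  rewrite ler_expR; apply: ler_wpM2l => //.
  apply: le_trans LT; lra.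
have cw := (Sphi_within (u:=u') hS hb M0 a0 pc (lexx 0) L0).
have hI : Rintegral lebesgue_measure `[0, L] (fun t => `|B (S t u')| ^+ 2)
          <= c * G.
  apply: (le_trans (y := Rintegral lebesgue_measure `[0, L] (fun t => c * `|B (S t u')|))).
    apply: le_Rintegral => //.
    - apply: int_cont.
      have pc2 : continuous (fun x : X => `|B x| ^+ 2).
        by move=> x; exact: (continuous_comp (pc x) (@exprn_continuous _ 2 _)).
      exact: (Sphi_within (u:=u') hS hb M0 a0 pc2 (lexx 0) L0).
    - apply: int_cont.
      have pc2 : continuous (fun x : X => c * `|B x|).
        by move=> x; have := continuousM (@cst_continuous _ _ c x) (pc x); exact.
      exact: (Sphi_within (u:=u') hS hb M0 a0 pc2 (lexx 0) L0).
    - move=> t; rewrite /= in_itv /= => /andP[t0 tL].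
      by rewrite expr2 ler_wpM2r // gb // t0.
  rewrite RintegralZl //; last exact: int_cont.
  apply: ler_wpM2l => //.
  have -> : Rintegral lebesgue_measure `[0, L] (fun t => `|B (S t u')|) =
            Rintegral lebesgue_measure `[0, L] (fun t => `|B (S (t + a) u)|).
    apply: eq_Rintegral => t; rewrite inE /= in_itv /= => /andP[t0 _].
    by rewrite /u' Sadd.
  rewrite (shift_int (G := fun t => `|B (S t u)|)) //; last first.
    by apply: (Sphi_within (u:=u) hS hb M0 a0 pc a00); rewrite ltr_pwDl.
  apply: sub_Rint => //.
  - exact: (Sphi_within (u:=u) hS hb M0 a0 pc (lexx 0) T0).
apply: ler_pM.
- by rewrite mulr_ge0 ?expR_ge0 // th0 // ltW.
- exact: sqrtr_ge0.
- by apply: ler_wpM2r; [exact: expR_ge0 | apply: thm; [exact: ltW | apply: le_trans LT; rewrite lerDl]].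
- exact: ler_wsqrtr hI.
Qed.

Lemma amgm (R : realType) (x y z : R) : 0 <= x -> 0 <= y -> 0 <= z ->
  z * z = x * y -> 2 * z <= x + y.
Proof.
move=> x0 y0 z0 h; rewrite -(@ler_pXn2r _ 2%N) ?nnegrE; try lra.
rewrite !expr2; have := sqr_ge0 (x - y); rewrite expr2; nra.
by [].

Qed.

Lemma young (R : realType) (th e K E G : R) : 0 <= th -> 0 < e -> 0 <= K ->
  0 <= E -> 0 <= G ->
  th * e * Num.sqrt (K * E * G) <= E / (2 * (e * e)) + th ^+ 2 * K * (e * e * e * e) * G / 2.
Proof.
move=> t0 e0 K0 E0 G0.
set s := Num.sqrt (K * E * G).
have s0 : 0 <= s by exact: sqrtr_ge0.
have s2 : s * s = K * E * G by rewrite -expr2 sqr_sqrtr // !mulr_ge0.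
have ee : 0 < e * e by rewrite mulr_gt0.
have h := @amgm R E (th ^+ 2 * K * (e * e * e * e * e * e) * G) (th * (e * e * e) * s) E0.
have := h ltac:(rewrite !mulr_ge0 // ltW //) ltac:(rewrite !mulr_ge0 // ltW //).
have hz : th * (e * e * e) * s * (th * (e * e * e) * s) =
          E * (th ^+ 2 * K * (e * e * e * e * e * e) * G).
  have -> : th * (e * e * e) * s * (th * (e * e * e) * s) =
     th ^+ 2 * (e * e * e * e * e * e) * (s * s) by ring.
  by rewrite s2; ring.
move=> /(_ hz) H.
have -> : th * e * s = (2 * (th * (e * e * e) * s)) / (2 * (e * e)).
  by field; rewrite gt_eqF.
have -> : E / (2 * (e * e)) + th ^+ 2 * K * (e * e * e * e) * G / 2 =
  (E + th ^+ 2 * K * (e * e * e * e * e * e) * G) / (2 * (e * e)).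
  by field; rewrite gt_eqF.
by rewrite ler_pM2r // invr_gt0 mulr_gt0.
Qed.

Unset Implicit Arguments.

Theorem proposition2p4 (R : realType) (d k : R) (hd : 0 < d) (hk : 0 < k) :
  exists N : R, 0 < N /\
  forall (X U : completeNormedModType R) (S : R -> X -> X) (B : X -> U)
         (M alpha : R) (theta : R -> R),
    hilbert_space X -> hilbert_space U ->
    C0_semigroup S ->
    0 < M -> 0 <= alpha ->
    (forall t, 0 <= t -> opnorm (S t) <= M * expR (alpha * t)) ->
    bounded_linear B ->
    (forall t, 0 <= t -> 0 <= theta t) ->
    (forall s t, 0 <= s -> s <= t -> theta s <= theta t) ->
    (forall (L : R) (u0 : X), 0 < L ->
       `|S L u0| <= theta L * expR (d / L `^ k) *
         Num.sqrt (Rintegral lebesgue_measure `[0, L]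
                     (fun t => `|B (S t u0)| ^+ 2))) ->
    forall (T : R) (u0 : X), 0 < T ->
      `|S T u0| <= (theta T ^+ 2 * opnorm B * M * expR (alpha * T))
                     * expR (N / T `^ k) *
         Rintegral lebesgue_measure `[0, T] (fun t => `|B (S t u0)|).
Proof.
pose r : R := expR (ln (2/3) / k).
have r0 : 0 < r := expR_gt0 _.
have l23 : ln (2/3 : R) < 0 by apply: ln_lt0; apply/andP; split; lra.
have r1 : r < 1 by rewrite /r expR_lt1 pmulr_llt0 // invr_gt0.
have rk : r `^ k = 2/3.
  rewrite /powR gt_eqF // /r expRK mulrC divfK ?gt_eqF // lnK // posrE; lra.
have q0 : 0 < (1 - r) `^ k by apply: powR_gt0; rewrite subr_gt0.
exists (4 * d / (1 - r) `^ k); split; first by rewrite divr_gt0 // mulr_gt0.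
move=> X U S B M alpha theta hX hU hS M0 a0 hb bB th0 thm hobs T u T0.
set q := (1 - r) `^ k.
set G := Rintegral lebesgue_measure `[0, T] (fun t => `|B (S t u)|).
have G0 : 0 <= G by apply: Rintegral_ge0 => x _.
pose th := theta T.
have th0' : 0 <= th by apply: th0; exact: ltW.
have oB := opnorm_ge0 bB.
pose K := opnorm B * M * expR (alpha * T).
have K0 : 0 <= K by rewrite /K !mulr_ge0 // ?ltW // expR_ge0.
have Tk : 0 < T `^ k by exact: powR_gt0.
pose c := d / (T `^ k * q).
have c0 : 0 < c by rewrite /c divr_gt0 // mulr_gt0.
pose nu := fun m : nat => c / (2/3) ^+ m.
have p23 : forall m, 0 < (2/3 : R) ^+ m by move=> m; apply: exprn_gt0; lra.
have nuS : forall m, nu m.+1 = nu m * (3/2).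
  move=> m; rewrite /nu exprSr; field.
  by rewrite gt_eqF // p23.
have nuc : forall m, c <= nu m.
  move=> m; rewrite /nu ler_pdivlMr //; apply: ler_piMr; first exact: ltW.
  by apply: exprn_ile1; lra.
pose l := fun m : nat => T * r ^+ m.
pose Lm := fun m : nat => T * (1 - r) * r ^+ m.
have rm0 : forall m, 0 < r ^+ m by move=> m; exact: exprn_gt0.
have Lm0 : forall m, 0 < Lm m.
  by move=> m; rewrite /Lm !mulr_gt0 // subr_gt0.
have Lml : forall m, Lm m + l m.+1 = l m by move=> m; rewrite /Lm /l exprS; ring.
have l0 : forall m, 0 <= l m by move=> m; rewrite /l mulr_ge0 // ltW.
have lT : forall m, l m <= T.
  move=> m; rewrite /l; apply: ler_piMr; [exact: ltW | apply: exprn_ile1; exact: ltW].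
have rmk : forall m : nat, (r ^+ m) `^ k = (2/3) ^+ m.
  move=> m; rewrite -powR_mulrn ?ltW // -powRrM mulrC powRrM rk powR_mulrn //; lra.
have mu : forall m, d / (Lm m) `^ k = nu m.
  move=> m; rewrite /Lm powRM ?mulr_ge0 ?ltW ?subr_gt0 // powRM ?ltW ?subr_gt0 //.
  rewrite rmk -/q /nu /c; field.
  by rewrite !gt_eqF ?p23.
have step : forall m, `|S (l m) u| <=
    `|S (l m.+1) u| / (2 * (expR (nu m) * expR (nu m))) +
    th ^+ 2 * K * (expR (nu m) * expR (nu m) * expR (nu m) * expR (nu m)) * G / 2.
  move=> m.
  have := core (d:=d) (k:=k) (T:=T) (a:=l m.+1) (L:=Lm m) u hS M0 a0 hb bB th0 thm hobs
    (l0 _) (Lm0 _) ltac:(by rewrite Lml lT).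
  rewrite Lml mu => h; apply: le_trans h _.
  by apply: young => //; exact: expR_gt0.
pose h : R := 2^-1.
have h0 : 0 <= h by rewrite /h; lra.
pose w := fun m : nat => expR (4 * c - 4 * nu m) * h ^+ m.
pose C := th ^+ 2 * K * expR (4 * c).
have ind : forall m : nat, `|S T u| <= w m * `|S (l m) u| + (1 - h ^+ m) * C * G.
  elim => [|m IH].
    by rewrite /w /nu /l !expr0 !mulr1 divr1 subrr expR0 mul1r subrr !mul0r addr0.
  set e := expR (nu m).
  set A := expR (4 * c - 4 * nu m).
  have e0 : 0 < e by exact: expR_gt0.
  have hA1 : expR (4 * c - 4 * nu m.+1) = A / (e * e).
    rewrite nuS.
    have -> : 4 * c - 4 * (nu m * (3 / 2)) = (4 * c - 4 * nu m) + (- nu m) + (- nu m)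
      by field.
    have hA : A = expR (4 * c) / expR (4 * nu m) by rewrite /A expRD expRN.
    by rewrite !expRD !expRN hA -/e invfM !mulrA.
  have e4 : expR (4 * nu m) = e * e * e * e.
    have -> : 4 * nu m = nu m + nu m + nu m + nu m by ring.
    by rewrite !expRD.
  have hC : expR (4 * c) = A * (e * e * e * e).
    by rewrite -e4 /A -expRD subrK.
  have w0 : 0 <= w m by rewrite /w mulr_ge0 // ?expR_ge0 // exprn_ge0.
  have st := ler_wpM2l w0 (step m).
  apply: le_trans IH _.
  apply: le_trans (lerD st (lexx ((1 - h ^+ m) * C * G))) _.
  rewrite le_eqVlt; apply/orP; left; apply/eqP.
  rewrite /w -/A hA1 /C hC -/e (exprS (2^-1) m).
  set p := (2^-1 : R) ^+ m; field.
  by rewrite gt_eqF.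
pose D := M * expR (alpha * T) * `|u|.
have D0 : 0 <= D by rewrite /D !mulr_ge0 // ?ltW // expR_ge0.
have C0 : 0 <= C by rewrite /C; apply: mulr_ge0; [apply: mulr_ge0 =>//; exact: exprn_ge0 | exact: expR_ge0].
have fin : forall m : nat, `|S T u| <= C * G + h ^+ m * D.
  move=> m; apply: le_trans (ind m) _.
  rewrite addrC; apply: lerD.
    rewrite -mulrA; apply: ler_piMl; first by rewrite mulr_ge0.
    by rewrite lerBlDr lerDl exprn_ge0.
  rewrite /w; apply: ler_pM.
  - by rewrite mulr_ge0 // ?expR_ge0 // exprn_ge0.
  - exact: normr_ge0.
  - rewrite -[leRHS]mul1r ler_wpM2r ?exprn_ge0 //.
    by rewrite expR_le1 subr_le0 ler_wpM2l // nuc.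
  - apply: le_trans (S_bound _ hS hb (l0 m)) _.
    apply: ler_wpM2r => //; apply: ler_wpM2l; first exact: ltW.
    by rewrite ler_expR ler_wpM2l.
have EC : `|S T u| <= C * G.
  rewrite leNgt; apply/negP => hlt.
  pose δ := `|S T u| - C * G.
  have δ0 : 0 < δ by rewrite /δ subr_gt0.
  pose m := Num.Def.archi_bound (D / δ).
  have hm : D / δ < m%:R by apply: archi_boundP; rewrite divr_ge0 // ltW.
  have m2 : (m%:R : R) <= 2 ^+ m.
    by rewrite -natrX ler_nat ltnW // ltn_expl.
  have hD : h ^+ m * D < δ.
    rewrite /h exprVn mulrC -ltr_pdivlMr ?exprn_gt0 //.
    rewrite -ltr_pdivrMl // mulrC; apply: lt_le_trans hm _.
    by rewrite invrK.
  have := fin m; rewrite leNgt => /negP; apply.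
  by move: hD; rewrite /δ ltrBrDl.
apply: le_trans EC _.
rewrite le_eqVlt; apply/orP; left; apply/eqP.
rewrite /C /K /th; congr (_ * _).
rewrite -!mulrA; do 4 congr (_ * _); congr (_ * expR _).
rewrite /c; field.
by rewrite !gt_eqF.
Qed.
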